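(* For every $1\le k\le 22$ and every $n\ge3$, the Lie algebra $\mathfrak a_k(n)$ has trivial center.
   Context: Pauli matrices $I,X,Y,Z$; for two-qubit strings $AB$, $A_jB_{j+1}$ denotes the length-$n$ Pauli string with $A$ at position $j$, $B$ at position $j+1$, $I$ elsewhere. For a set $S$ of Pauli strings, $\mathrm{Lie}\langle S\rangle$ is the smallest real Lie subalgebra of $\mathfrak u(2^n)$ containing $\{iP:P\in S\}$. For a set $G$ of two-qubit strings, $G(n)=\mathrm{Lie}\langle A_jB_{j+1}: AB\in G, 1\le j\le n-1\rangle$. Generating sets: $\mathfrak a_1=\{XY\}$, $\mathfrak a_2=\{XY,YX\}$, $\mathfrak a_3=\{XX,YZ\}$, $\mathfrak a_4=\{XX,YY\}$, $\mathfrak a_5=\{XY,YZ\}$, $\mathfrak a_6=\{XX,YZ,ZY\}$, $\mathfrak a_7=\{XX,YY,ZZ\}$, $\mathfrak a_8=\{XX,XZ\}$, $\mathfrak a_9=\{XY,XZ\}$, $\mathfrak a_{10}=\{XY,YZ,ZX\}$, $\mathfrak a_{11}=\{XY,YX,YZ\}$, $\mathfrak a_{12}=\{XX,XY,YZ\}$, $\mathfrak a_{13}=\{XX,YY,YZ\}$, $\mathfrak a_{14}=\{XX,YY,XY\}$, $\mathfrak a_{15}=\{XX,XY,XZ\}$, $\mathfrak a_{16}=\{XY,YX,YZ,ZY\}$, $\mathfrak a_{17}=\{XX,XY,ZX\}$, $\mathfrak a_{18}=\{XX,XZ,YY,ZY\}$, $\mathfrak a_{19}=\{XX,XY,ZX,YZ\}$,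 $\mathfrak a_{20}=\{XX,YY,ZZ,ZY\}$, $\mathfrak a_{21}=\{XX,YY,XY,ZX\}$, $\mathfrak a_{22}=\{XX,XY,XZ,YX\}$. *)

(* Defs.v *)
From HB Require Import structures.
From mathcomp Require Import all_boot all_order all_algebra.
From mathcomp Require Import reals.
From mathcomp Require Import complex.

Set Implicit Arguments.
Unset Strict Implicit.
Unset Printing Implicit Defensive.

Import Order.TTheory GRing.Theory Num.Theory.
Local Open Scope ring_scope.
Local Open Scope complex_scope.

Inductive pauli := PI | PX | PY | PZ.

Section Pauli.
Variable R : realType.
Local Notation C := R[i].

Definition pauli_entry (p : pauli) (a b : bool) : C :=
  match p, a, b with
  | PI, false, false => 1 | PI, true, true => 1
  | PX, false, true => 1 | PX, true, false => 1
  | PY, false, true => - 'i | PY, true, false => 'i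
  | PZ, false, false => 1 | PZ, true, true => -1
  | _, _, _ => 0
  end.

(* the k-th qubit of a computational-basis index m < 2^n (position k,
   0-indexed, corresponds to bit n-1-k, i.e. the most significant bit is
   qubit 0); Kronecker product convention P_0 (x) P_1 (x) ... (x) P_{n-1} *)
Definition qbit (n k m : nat) : bool := odd (m %/ 2 ^ (n.-1 - k)).

Definition pauli_string (n : nat) (s : nat -> pauli) : 'M[C]_(2 ^ n) :=
  \matrix_(i, j) \prod_(k < n) pauli_entry (s k) (qbit n k i) (qbit n k j).

Definition two_local (A B : pauli) (j : nat) : nat -> pauli :=
  fun k => if k == j then A else if k == j.+1 then B else PI.

(* smallest real Lie subalgebra of u(2^n) containing {i P : P in S} *)
Inductive lie_closure (n : nat) (S : 'M[C]_(2 ^ n) -> Prop) :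
    'M[C]_(2 ^ n) -> Prop :=
  | lc_gen P : S P -> lie_closure S ('i *: P)
  | lc_add A B : lie_closure S A -> lie_closure S B -> lie_closure S (A + B)
  | lc_scale (r : R) A : lie_closure S A -> lie_closure S (r%:C *: A)
  | lc_bracket A B : lie_closure S A -> lie_closure S B ->
      lie_closure S (A *m B - B *m A).

(* G(n) for a set G of two-qubit strings: positions 1 <= j <= n-1
   (1-indexed) are 0 <= j < n-1 (0-indexed) *)
Definition G_lie (G : seq (pauli * pauli)) (n : nat) : 'M[C]_(2 ^ n) -> Prop :=
  lie_closure (fun M => exists2 t, (t < size G)%N &
    exists2 j, (j < n.-1)%N &
      M = pauli_string n (two_local (nth (PI, PI) G t).1 (nth (PI, PI) G t).2 j)).

End Pauli.

Definition gen_set (k : nat) : seq (pauli * pauli) :=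
  match k with
  | 1 => [:: (PX,PY)]
  | 2 => [:: (PX,PY); (PY,PX)]
  | 3 => [:: (PX,PX); (PY,PZ)]
  | 4 => [:: (PX,PX); (PY,PY)]
  | 5 => [:: (PX,PY); (PY,PZ)]
  | 6 => [:: (PX,PX); (PY,PZ); (PZ,PY)]
  | 7 => [:: (PX,PX); (PY,PY); (PZ,PZ)]
  | 8 => [:: (PX,PX); (PX,PZ)]
  | 9 => [:: (PX,PY); (PX,PZ)]
  | 10 => [:: (PX,PY); (PY,PZ); (PZ,PX)]
  | 11 => [:: (PX,PY); (PY,PX); (PY,PZ)]
  | 12 => [:: (PX,PX); (PX,PY); (PY,PZ)]
  | 13 => [:: (PX,PX); (PY,PY); (PY,PZ)]
  | 14 => [:: (PX,PX); (PY,PY); (PX,PY)]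
  | 15 => [:: (PX,PX); (PX,PY); (PX,PZ)]
  | 16 => [:: (PX,PY); (PY,PX); (PY,PZ); (PZ,PY)]
  | 17 => [:: (PX,PX); (PX,PY); (PZ,PX)]
  | 18 => [:: (PX,PX); (PX,PZ); (PY,PY); (PZ,PY)]
  | 19 => [:: (PX,PX); (PX,PY); (PZ,PX); (PY,PZ)]
  | 20 => [:: (PX,PX); (PY,PY); (PZ,PZ); (PZ,PY)]
  | 21 => [:: (PX,PX); (PY,PY); (PX,PY); (PZ,PX)]
  | 22 => [:: (PX,PX); (PX,PY); (PX,PZ); (PY,PX)]
  | _ => [::]
  end.

Definition a_lie (R : realType) (k n : nat) := @G_lie R (gen_set k) n.
Arguments a_lie R k n : clear implicits.

(* Main.v *)
Require Import Defs.
From HB Require Import structures.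
From mathcomp Require Import all_boot all_order all_algebra.
From mathcomp Require Import reals complex.
Import GRing.Theory Num.Theory.
From mathcomp Require Import ring zify.
Local Open Scope ring_scope.
Local Open Scope complex_scope.

Definition pmul (p q : pauli) : pauli :=
  match p, q with
  | PI, q => q | p, PI => p
  | PX, PX => PI | PY, PY => PI | PZ, PZ => PI
  | PX, PY => PZ | PY, PX => PZ | PY, PZ => PX | PZ, PY => PX
  | PZ, PX => PY | PX, PZ => PY
  end.
Definition pexp (p q : pauli) : nat :=
  match p, q with
  | PX, PY => 1 | PY, PZ => 1 | PZ, PX => 1
  | PY, PX => 3 | PZ, PY => 3 | PX, PZ => 3
  | _, _ => 0
  end.

Definition pauli_eqb (p q : pauli) := match p, q with
  | PI, PI | PX, PX | PY, PY | PZ, PZ => true | _, _ => false end.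
Lemma pauli_eqP : Equality.axiom pauli_eqb.
Proof. by case; case; constructor. Qed.
HB.instance Definition _ := hasDecEq.Build pauli pauli_eqP.

Definition word := (pauli * pauli * pauli)%type.
Definition win (w : word) (o k : nat) : pauli :=
  let: (a, b, c) := w in
  if k == o then a else if k == o.+1 then b else if k == o.+2 then c else PI.
Definition wmul (w1 w2 : word) : word :=
  let: (a1, b1, c1) := w1 in let: (a2, b2, c2) := w2 in
  (pmul a1 a2, pmul b1 b2, pmul c1 c2).
Definition wexp (w1 w2 : word) : nat :=
  let: (a1, b1, c1) := w1 in let: (a2, b2, c2) := w2 in
  (pexp a1 a2 + pexp b1 b2 + pexp c1 c2)%N.

Definition wpairs (S : seq word) := [seq (a, b) | a <- S, b <- S].
Definition step (S : seq word) : seq word :=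
  undup (S ++ [seq wmul x.1 x.2 | x <- wpairs S & odd (wexp x.1 x.2)]).
Definition reach (S : seq word) (t : word) :=
  has (fun x => (wmul x.1 x.2 == t) && odd (wexp x.1 x.2)) (wpairs S).
Definition gens_of (G : seq (pauli * pauli)) : seq word :=
  [seq (x.1, x.2, PI) | x <- G] ++ [seq (PI, x.1, x.2) | x <- G].
Definition check (G : seq (pauli * pauli)) :=
  let S := iter 1 step (gens_of G) in all (reach S) (gens_of G).

Lemma check_all : all (fun k => check (gen_set k)) (iota 1 22).
Proof. by vm_compute. Qed.

Lemma win_mul w1 w2 o k : pmul (win w1 o k) (win w2 o k) = win (wmul w1 w2) o k.
Proof.
case: w1 => [[a1 b1] c1]; case: w2 => [[a2 b2] c2]; rewrite /win /=.
by case: (k == o); case: (k == o.+1); case: (k == o.+2).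
Qed.

Lemma sum3 n o (F : nat -> nat) : (o.+2 < n)%N ->
  (forall k, k != o -> k != o.+1 -> k != o.+2 -> F k = 0%N) ->
  (\sum_(k < n) F k = F o + F o.+1 + F o.+2)%N.
Proof.
move=> ho hF.
rewrite -(big_mkord xpredT F) (@big_cat_nat _ _ _ o 0 n) /= //; last by lia.
rewrite big_nat big1; last by move=> k /andP[_ hk]; apply: hF; apply/eqP; lia.
rewrite add0n big_ltn; last by lia.
rewrite big_ltn; last by lia.
rewrite big_ltn; last by lia.
rewrite big_nat big1; last by move=> k /andP[hk1 hk]; apply: hF; apply/eqP; lia.
by rewrite addn0 !addnA.
Qed.

Lemma win_exp n o w1 w2 : (o.+2 < n)%N ->
  (\sum_(k < n) pexp (win w1 o k) (win w2 o k) = wexp w1 w2)%N.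
Proof.
move=> ho; rewrite (@sum3 n o (fun k => pexp (win w1 o k) (win w2 o k))) //.
  have e1 : (o.+1 == o) = false by apply/eqP; lia.
  have e2 : (o.+2 == o) = false by apply/eqP; lia.
  have e3 : (o.+2 == o.+1) = false by apply/eqP; lia.
  case: w1 => [[a1 b1] c1]; case: w2 => [[a2 b2] c2].
  by rewrite /win /= !eqxx e1 e2 e3.
move=> k h1 h2 h3.
case: w1 => [[a1 b1] c1]; case: w2 => [[a2 b2] c2].
by rewrite /win (negbTE h1) (negbTE h2) (negbTE h3).
Qed.

Section S.
Variable R : realType.
Local Notation C := R[i].

Lemma ii : 'i%R * 'i%R = -1 :> C.
Proof. by rewrite -expr2 sqrCi. Qed.

Lemma pe_mul p q a c :
  pauli_entry R p a false * pauli_entry R q false c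
  + pauli_entry R p a true * pauli_entry R q true c
  = 'i%R ^+ pexp p q * pauli_entry R (pmul p q) a c.
Proof.
case: p; case: q; case: a; case: c;
  rewrite /= ?complexiE ?expr0 ?expr1 ?mul0r ?mulr0 ?mul1r ?mulr1 ?add0r ?addr0 //.
all: rewrite ?exprS ?expr0 ?mulr1 ?mulNr ?mulrN ?ii ?opprK ?mulN1r ?mulrN1 //.
all: try (rewrite mulNr ii ?opprK //).
all: ring.
Qed.

Lemma bits_inj n l1 l2 : (l1 < 2^n)%N -> (l2 < 2^n)%N ->
  (forall m, (m < n)%N -> odd (l1 %/ 2^m) = odd (l2 %/ 2^m)) -> l1 = l2.
Proof.
elim: n l1 l2 => [|n IH] l1 l2.
  by rewrite expn0 !ltnS !leqn0 => /eqP-> /eqP->.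
move=> h1 h2 H.
have e0 := H 0%N (ltn0Sn n); rewrite !expn0 !divn1 in e0.
rewrite -[l1]odd_double_half -[l2]odd_double_half e0.
have -> : l1./2 = l2./2; last by [].
apply: IH.
- by rewrite -divn2 ltn_divLR // -expnSr.
- by rewrite -divn2 ltn_divLR // -expnSr.
- move=> m hm; have := H m.+1 hm; by rewrite expnS !divnMA !divn2.
Qed.

Definition phi n (l : 'I_(2^n)) : {ffun 'I_n -> bool} :=
  [ffun k : 'I_n => qbit n k l].

Lemma phi_inj n : injective (@phi n).
Proof.
move=> l1 l2 /ffunP H; apply/val_inj/bits_inj => //= m hm.
have hk : (n.-1 - m < n)%N by lia.
have := H (Ordinal hk); rewrite !ffunE /qbit /=.
have -> : (n.-1 - (n.-1 - m) = m)%N by lia.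
by [].
Qed.

Lemma phi_bij n : bijective (@phi n).
Proof.
apply: (inj_card_bij (@phi_inj n)).
by rewrite card_ffun card_bool !card_ord.
Qed.

Lemma sum_prod_bits n (F : 'I_n -> bool -> C) :
  \sum_(l < 2^n) \prod_(k < n) F k (qbit n k l) = \prod_(k < n) \sum_(b : bool) F k b.
Proof.
rewrite bigA_distr_bigA /= (reindex (@phi n)) /=; last by apply: onW_bij; apply: phi_bij.
by apply: eq_bigr => l _; apply: eq_bigr => k _; rewrite ffunE.
Qed.

Lemma ps_mul n s t : pauli_string R n s *m pauli_string R n t =
  ('i%R ^+ (\sum_(k < n) pexp (s k) (t k))) *: pauli_string R n (fun k => pmul (s k) (t k)).
Proof.
apply/matrixP => a c; rewrite !mxE.
under eq_bigr => l _ do rewrite !mxE -big_split /=.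
rewrite (@sum_prod_bits n (fun k b => pauli_entry R (s k) (qbit n k a) b * pauli_entry R (t k) b (qbit n k c))).
rewrite -prodrXr -big_split /=.
apply: eq_bigr => k _; rewrite big_bool /= addrC; exact: pe_mul.
Qed.


Lemma ps_ext n s t : (forall k, (k < n)%N -> s k = t k) ->
  pauli_string R n s = pauli_string R n t.
Proof.
move=> H; apply/matrixP => a c; rewrite !mxE.
by apply: eq_bigr => k _; rewrite H.
Qed.

Lemma pmulC p q : pmul p q = pmul q p.
Proof. by case: p; case: q. Qed.

Lemma pexp_swap p q : 'i%R ^+ pexp q p = (-1) ^+ pexp p q * 'i%R ^+ pexp p q :> C.
Proof.
case: p; case: q; rewrite /= ?expr0 ?mulr1 // ?expr1 ?mulN1r //.
all: rewrite !exprS expr0 !mulr1 ?ii ?mulN1r ?mulrN1 ?opprK ?mulrN ?mulNr ?ii ?opprK //.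
all: by rewrite mul1r ?complexiE.
Qed.

Lemma ps_bracket n (s t : nat -> pauli) : odd (\sum_(k < n) pexp (s k) (t k)) ->
  ('i%R *: pauli_string R n s) *m ('i%R *: pauli_string R n t)
  - ('i%R *: pauli_string R n t) *m ('i%R *: pauli_string R n s)
  = (-2 * 'i%R ^+ (\sum_(k < n) pexp (s k) (t k))) *: pauli_string R n (fun k => pmul (s k) (t k)).
Proof.
move=> hE.
rewrite -!scalemxAl -!scalemxAr !ps_mul.
have -> : pauli_string R n (fun k => pmul (t k) (s k)) = pauli_string R n (fun k => pmul (s k) (t k)).
  by apply: ps_ext => k _; rewrite pmulC.
have -> : 'i%R ^+ (\sum_(k < n) pexp (t k) (s k)) =
   (-1) ^+ (\sum_(k < n) pexp (s k) (t k)) * 'i%R ^+ (\sum_(k < n) pexp (s k) (t k)) :> C.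
  rewrite -!prodrXr -big_split /=; apply: eq_bigr => k _; exact: pexp_swap.
rewrite -signr_odd hE !scalerA -scalerBl.
congr (_ *: _).
rewrite expr1 !mulrA ii; ring.
Qed.

Lemma lc_ps n (S : 'M[C]_(2^n) -> Prop) (s t : nat -> pauli) :
  lie_closure S ('i%R *: pauli_string R n s) ->
  lie_closure S ('i%R *: pauli_string R n t) ->
  odd (\sum_(k < n) pexp (s k) (t k)) ->
  lie_closure S ('i%R *: pauli_string R n (fun k => pmul (s k) (t k))).
Proof.
move=> hs ht hE.
have hb := lc_bracket hs ht; rewrite ps_bracket // in hb.
set E := (\sum_(k < n) pexp (s k) (t k)) in hE hb.
set h := E./2.
have eE : 'i%R ^+ E = 'i%R * (-1) ^+ h :> C.
  by rewrite -[E]odd_double_half hE -mul2n exprD exprM sqrCi expr1.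
have := lc_scale (- (2^-1) * (-1) ^+ h) hb.
rewrite scalerA eE.
suff -> : (- (2^-1) * (-1) ^+ h : R)%:C * (-2 * ('i%R * (-1) ^+ h)) = 'i%R :> C by [].
rewrite rmorphM rmorphN fmorphV rmorphXn rmorphN1 rmorph_nat.
set x := (-1) ^+ h.
have hx : x * x = 1 by rewrite /x -exprD -signr_odd addnn odd_double.
have -> : - 2^-1 * x * (-2 * ('i%R * x)) = (2^-1 * 2) * (x * x) * 'i%R :> C by ring.
by rewrite hx mulVf ?mulr1 ?mul1r // pnatr_eq0.
Qed.

Section Win.
Variables (n o : nat) (ho : (o.+2 < n)%N) (S : 'M[C]_(2^n) -> Prop).
Let P w := lie_closure S ('i%R *: pauli_string R n (win w o)).

Lemma step_sound L : (forall w, w \in L -> P w) -> forall w, w \in step L -> P w.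
Proof.
move=> H w; rewrite mem_undup mem_cat => /orP[/H //|].
case/mapP => -[a b]; rewrite mem_filter /= => /andP[hodd hab] ->.
case/allpairsP: hab => -[a' b'] /= [ha hb [ea eb]]; subst a' b'.
have := @lc_ps n S _ _ (H a ha) (H b hb); rewrite win_exp // => /(_ hodd); rewrite /P.
suff -> : pauli_string R n (win (wmul a b) o) =
  pauli_string R n (fun k => pmul (win a o k) (win b o k)) by [].
by apply: ps_ext => k _; rewrite win_mul.
Qed.

Lemma iter_sound m L : (forall w, w \in L -> P w) -> forall w, w \in iter m step L -> P w.
Proof. by elim: m => //= m IH H; apply: step_sound; apply: IH. Qed.

End Win.

Lemma tr_comm_bracket m (A X Y : 'M[C]_m) : A *m X = X *m A ->
  \tr (A *m (X *m Y - Y *m X)) = 0.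
Proof.
move=> hAX; rewrite mulmxBr raddfB /=.
have -> : \tr (A *m (Y *m X)) = \tr (A *m (X *m Y)).
  by rewrite mulmxA mxtrace_mulC [X *m (A *m Y)]mulmxA -hAX -mulmxA.
by rewrite subrr.
Qed.

Lemma tr_ps_zero n (L : 'M[C]_(2^n) -> Prop) (A : 'M[C]_(2^n)) (s t : nat -> pauli) :
  (forall B, L B -> A *m B = B *m A) ->
  L ('i%R *: pauli_string R n s) -> L ('i%R *: pauli_string R n t) ->
  odd (\sum_(k < n) pexp (s k) (t k)) ->
  \tr (A *m ('i%R *: pauli_string R n (fun k => pmul (s k) (t k)))) = 0.
Proof.
move=> hc hs ht hE.
have := @tr_comm_bracket _ _ _ ('i%R *: pauli_string R n t) (hc _ hs).
rewrite ps_bracket // -!scalemxAr !mxtraceZ => /eqP.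
rewrite !mulf_eq0 => /orP[/orP[|]|/eqP ->]; last by rewrite mulr0.
  by rewrite oppr_eq0 pnatr_eq0.
by rewrite expf_eq0 (negbTE (@neq0Ci _)) andbF.
Qed.

Lemma conjci : ('i%C)^*%C = - 'i%C :> C.
Proof. by apply/eqP; rewrite eq_complex /= oppr0 !eqxx. Qed.

Lemma conj_pe p a b : (pauli_entry R p a b)^*%C = pauli_entry R p b a.
Proof.
case: p; case: a; case: b; rewrite /= ?rmorph0 ?rmorph1 ?rmorphN ?rmorphN1 ?conjci ?opprK //.
all: by apply/eqP; rewrite eq_complex /= ?oppr0 ?opprK ?eqxx.
Qed.

Lemma ps_herm n s (i j : 'I_(2^n)) : ((pauli_string R n s) j i)^*%C = pauli_string R n s i j.
Proof.
rewrite !mxE rmorph_prod; apply: eq_bigr => k _; exact: conj_pe.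
Qed.

Lemma conjcM (x y : C) : (x * y)^*%C = x^*%C * y^*%C.
Proof. exact: rmorphM. Qed.
Lemma conjcD (x y : C) : (x + y)^*%C = x^*%C + y^*%C.
Proof. exact: rmorphD. Qed.
Lemma conjcB (x y : C) : (x - y)^*%C = x^*%C - y^*%C.
Proof. exact: rmorphB. Qed.
Lemma conjc_sum m (F : 'I_m -> C) : (\sum_(l < m) F l)^*%C = \sum_(l < m) (F l)^*%C.
Proof. exact: rmorph_sum. Qed.
Lemma conjiR : ('i%R : C)^*%C = - 'i%R.
Proof. by rewrite -complexiE; apply/eqP; rewrite eq_complex /= oppr0 !eqxx. Qed.

Definition antiH m (M : 'M[C]_m) := forall i j, (M j i)^*%C = - M i j.
Arguments antiH {m}.

Lemma antiH_mul m (X Y : 'M[C]_m) : antiH X -> antiH Y ->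
  forall i j, ((X *m Y) j i)^*%C = (Y *m X) i j.
Proof.
move=> hX hY i j; rewrite !mxE conjc_sum; apply: eq_bigr => l _.
by rewrite conjcM hX hY mulrNN mulrC.
Qed.

Lemma antiH_closure n (S : 'M[C]_(2^n) -> Prop) M :
  (forall P, S P -> forall i j, (P j i)^*%C = P i j) ->
  lie_closure S M -> antiH M.
Proof.
move=> hS; elim => {M}.
- move=> P hP i j; by rewrite !mxE conjcM hS // conjiR mulNr.
- move=> X Y _ hX _ hY i j; by rewrite !mxE conjcD hX hY opprD.
- move=> r X _ hX i j; by rewrite !mxE conjcM conjc_real hX mulrN.
- move=> X Y _ hX _ hY i j.
  have e1 := @antiH_mul _ X Y hX hY i j; have e2 := @antiH_mul _ Y X hY hX i j.
  rewrite !mxE in e1 e2 *; by rewrite conjcB e1 e2 opprB.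
Qed.

Lemma antiH_tr0 m (A : 'M[C]_m) : antiH A -> \tr (A *m A) = 0 -> A = 0.
Proof.
move=> hA h0; apply/matrixP => i j; rewrite mxE.
have e : \tr (A *m A) = - \sum_i \sum_j A i j * (A i j)^*%C.
  rewrite /mxtrace -sumrN; apply: eq_bigr => i' _; rewrite mxE -sumrN.
  by apply: eq_bigr => j' _; rewrite hA mulrN opprK.
rewrite e in h0; move/eqP: h0; rewrite oppr_eq0 => /eqP h0.
have h1 := psumr_eq0P (fun i _ => sumr_ge0 _ (fun j _ => mulcJ_ge0 (A i j))) h0 (i:=i) isT.
have := psumr_eq0P (fun j _ => mulcJ_ge0 (A i j)) h1 (i:=j) isT.
by move/eqP; rewrite mulf_eq0 conjc_eq0 orbb => /eqP.
Qed.

End S.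

Lemma tl_win1 a b o k : two_local a b o k = win (a, b, PI) o k.
Proof. rewrite /two_local /win; repeat case: eqP => //; lia. Qed.

Lemma tl_win2 a b o k : two_local a b o.+1 k = win (PI, a, b) o k.
Proof. rewrite /two_local /win; repeat case: eqP => //; lia. Qed.

Section Main.
Variables (R : realType) (G : seq (pauli * pauli)) (n : nat).
Let S := (fun M => exists2 t, (t < size G)%N &
    exists2 j, (j < n.-1)%N &
      M = pauli_string R n (two_local (nth (PI, PI) G t).1 (nth (PI, PI) G t).2 j)).

Lemma gens_in o : (o.+2 < n)%N -> forall w, w \in gens_of G ->
  lie_closure S ('i%R *: pauli_string R n (win w o)).
Proof.
move=> ho w; rewrite mem_cat => /orP[] /mapP [x hx ->]; apply: lc_gen;
  exists (index x G); rewrite ?index_mem // nth_index //.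
- exists o; first by lia.
  by apply: ps_ext => k _; rewrite tl_win1.
- exists o.+1; first by lia.
  by apply: ps_ext => k _; rewrite tl_win2.
Qed.

Lemma key_win (A : 'M[R[i]]_(2^n)) o w :
  (forall B, lie_closure S B -> A *m B = B *m A) ->
  (o.+2 < n)%N -> check G -> w \in gens_of G ->
  \tr (A *m ('i%R *: pauli_string R n (win w o))) = 0.
Proof.
move=> hc ho /allP hck hw.
have hS0 := @iter_sound R n o ho S 1 (gens_of G) (@gens_in o ho).
case/hasP: (hck w hw) => -[a b] hab /andP[/eqP ew hodd].
case/allpairsP: hab => -[a' b'] /= [ha hb [ea eb]]; subst a' b'.
have := @tr_ps_zero R n (lie_closure S) A (win a o) (win b o) hc (hS0 a ha) (hS0 b hb).
rewrite win_exp // => /(_ hodd).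
suff -> : pauli_string R n (win w o) =
  pauli_string R n (fun k => pmul (win a o k) (win b o k)) by [].
by apply: ps_ext => k _; rewrite win_mul /= ew.
Qed.

End Main.

Theorem mainTheorem7 (R : realType) (k n : nat) :
  (1 <= k <= 22)%N -> (3 <= n)%N ->
  forall A : 'M[R[i]]_(2 ^ n), a_lie R k n A ->
    (forall B : 'M[R[i]]_(2 ^ n), a_lie R k n B -> A *m B = B *m A) ->
    A = 0.
Proof.
move=> hk hn A hA hc.
have hck : check (gen_set k).
  move/allP: check_all => /(_ k); apply; rewrite mem_iota; lia.
move: hA hc; rewrite /a_lie /G_lie; set G := gen_set k => hA hc.
have key : forall t j, (t < size G)%N -> (j < n.-1)%N ->
  \tr (A *m ('i%R *: pauli_string R n
     (two_local (nth (PI, PI) G t).1 (nth (PI, PI) G t).2 j))) = 0.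
  move=> t j ht hj.
  set x := nth (PI, PI) G t.
  have hx : x \in G by apply: mem_nth.
  case: (ltnP j.+2 n) => hj2.
  - have hw : (x.1, x.2, PI) \in gens_of G.
      by rewrite mem_cat; apply/orP; left; apply/mapP; exists x.
    have -> : pauli_string R n (two_local x.1 x.2 j) =
              pauli_string R n (win (x.1, x.2, PI) j).
      by apply: ps_ext => k' _; rewrite tl_win1.
    exact: (@key_win R G n A j _ hc hj2 hck hw).
  - have ej : j = (j.-1).+1 by clear -hn hj hj2; lia.
    have hw : (PI, x.1, x.2) \in gens_of G.
      by rewrite mem_cat; apply/orP; right; apply/mapP; exists x.
    have -> : pauli_string R n (two_local x.1 x.2 j) =
              pauli_string R n (win (PI, x.1, x.2) j.-1).
      by apply: ps_ext => k' _; rewrite {1}ej tl_win2.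
    apply: (@key_win R G n A j.-1 _ hc _ hck hw); clear -hn hj hj2; lia.
pose S := (fun M : 'M[R[i]]_(2 ^ n) => exists2 t, (t < size G)%N &
    exists2 j, (j < n.-1)%N &
      M = pauli_string R n (two_local (nth (PI, PI) G t).1 (nth (PI, PI) G t).2 j)).
have htr : forall M, lie_closure S M -> \tr (A *m M) = 0 :> R[i].
  move=> M; elim => {M}.
  - by move=> P [t ht [j hj ->]]; apply: key.
  - by move=> X Y _ hX _ hY; rewrite mulmxDr raddfD /= hX hY addr0.
  - by move=> r X _ hX; rewrite -scalemxAr mxtraceZ hX mulr0.
  - by move=> X Y hX1 _ _ _; apply: tr_comm_bracket; apply: hc.
apply: antiH_tr0; last exact: htr.
apply: antiH_closure hA => P [t ht [j hj ->]] i j'; exact: ps_herm.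
Qed.
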